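(* Let $p=p(n)\in[0,1]$ and let $\ell,c$ be positive integers with $q:=\frac{cp}{\ell}\le 1$. Let $k$ be any positive integer and let $\mathcal C$ be any $\ell$-rich collection of edge-colored $k$-uniform hypergraphs on vertex set $[n]$ with colors from $[c]$. Then $$\Pr\left[H\sim \mathcal H^k(n,p)\text{ contains some } C\in\widetilde{\mathcal C}\right]\le \Pr\left[H\sim\mathcal H^k_c(n,q)\text{ contains some }C\in\mathcal C\right].$$
   Context: $\mathcal H^k(n,p)$ is the binomial random $k$-uniform hypergraph on $[n]$: each $k$-subset of $[n]$ is an edge independently with probability $p$. $\mathcal H^k_c(n,q)$ is obtained by taking $H\sim\mathcal H^k(n,q)$ and assigning each edge a color from $[c]$ uniformly and independently at random. A collection $\mathcal C$ of edge-colored $k$-uniform hypergraphs on vertex set $[n]$ with colors in $[c]$ is called $\ell$-rich if for every $C\in\mathcal C$ and every edge $e\in E(C)$ there are at least $\ell$ distinct colors such that recoloring $e$ with that color (keeping all other edges and colors of $C$) yields an element of $\mathcal C$. $\widetilde{\mathcal C}$ denotes the set of uncolored hypergraphs obtained from members of $\mathcal C$ by forgetting the colors. ''$H$ contains $C$'' for a colored $C$ means $C$ is a subhypergraph of $H$ with the same edge colors. *)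

(* Defs.v *)
From HB Require Import structures.
From mathcomp Require Import all_boot all_order all_algebra.
Set Implicit Arguments. Unset Strict Implicit. Unset Printing Implicit Defensive.
Import Order.TTheory GRing.Theory Num.Theory.
Local Open Scope ring_scope.

Definition ksets (n k : nat) : {set {set 'I_n}} := [set e : {set 'I_n} | #|e| == k].

Definition is_khyper (n k : nat) (E : {set {set 'I_n}}) : bool :=
  E \subset ksets n k.

(* An edge-colored hypergraph on [n] with colors in [c]: each possible
   vertex subset e is either a non-edge (None) or an edge with color a
   (Some a). *)
Definition colhyp (n c : nat) := {ffun {set 'I_n} -> option 'I_c}.

Definition is_kcol (n k c : nat) (f : colhyp n c) : bool :=
  [forall e : {set 'I_n}, (f e != None) ==> (e \in ksets n k)].

Definition recolor (n c : nat) (f : colhyp n c) (e : {set 'I_n}) (a : 'I_c)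
  : colhyp n c := [ffun e' => if e' == e then Some a else f e'].

Definition rich (n c : nat) (l : nat) (CC : {set colhyp n c}) : Prop :=
  forall f, f \in CC -> forall e, f e != None ->
    (l <= #|[set a : 'I_c | recolor f e a \in CC]|)%N.

Definition forget (n c : nat) (f : colhyp n c) : {set {set 'I_n}} :=
  [set e : {set 'I_n} | f e != None].

Definition uncolored (n c : nat) (CC : {set colhyp n c}) : {set {set {set 'I_n}}} :=
  [set forget f | f in CC].

Definition contains_col (n c : nat) (F f : colhyp n c) : bool :=
  [forall e : {set 'I_n}, (f e != None) ==> (F e == f e)].

Definition prob_unc (R : realFieldType) (n k : nat) (p : R)
    (A : pred {set {set 'I_n}}) : R :=
  \sum_(E : {set {set 'I_n}} | is_khyper k E && A E)
     p ^+ #|E| * (1 - p) ^+ (#|ksets n k| - #|E|).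

(* Pr[H ~ H^k_c(n,q) satisfies A]: each k-set is an edge with prob. q and
   then gets each color with prob. 1/c, independently. *)
Definition prob_col (R : realFieldType) (n k c : nat) (q : R)
    (A : pred (colhyp n c)) : R :=
  \sum_(F : colhyp n c | is_kcol k F && A F)
     \prod_(e in ksets n k) (if F e is Some _ then q / c%:R else 1 - q).

(* Main.v *)
Require Import Defs.
From HB Require Import structures.
From mathcomp Require Import all_boot all_order all_algebra.
From mathcomp Require Import ring lra.
Import Order.TTheory GRing.Theory Num.Theory.
Local Open Scope ring_scope.

Lemma sum_option (R : nmodType) (T : finType) (F : option T -> R) :
  \sum_x F x = F None + \sum_y F (Some y).
Proof.
rewrite (bigD1 None) //=; congr (_ + _).
rewrite (reindex_omap Some id) //=; last by case.
by apply: eq_bigl => y; rewrite eqxx.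
Qed.

Section Proof.
Variables (R : realFieldType) (n : nat) (p : R) (l c k : nat).
Variable (CC : {set colhyp n c}).
Hypotheses (p0 : 0 <= p) (p1 : p <= 1) (l0 : (0 < l)%N) (c0 : (0 < c)%N).
Let q : R := c%:R * p / l%:R.
Hypothesis (q1 : q <= 1).
Hypothesis (rCC : rich l CC).

Local Notation X := (option (option 'I_c)).
Local Notation state := {ffun {set 'I_n} -> X}.

Definition wt (col : bool) (x : X) : R :=
  match x with
  | None => if col then 0 else p
  | Some None => if col then 1 - q else 1 - p
  | Some (Some _) => if col then q / c%:R else 0
  end.

Lemma q0 : 0 <= q.
Proof. by rewrite /q divr_ge0 // mulr_ge0. Qed.

Lemma qc : q / c%:R = p / l%:R.
Proof.
have cn : c%:R != 0 :> R by rewrite pnatr_eq0 -lt0n.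
have ln : l%:R != 0 :> R by rewrite pnatr_eq0 -lt0n.
rewrite /q. field. by apply/andP; split.
Qed.

Lemma wt_ge0 b x : 0 <= wt b x.
Proof.
have := q0; case: x => [[a|]|]; case: b => /= ? //; rewrite ?subr_ge0 //.
by rewrite qc divr_ge0.
Qed.

Definition weight (S : {set {set 'I_n}}) (g : state) : R :=
  \prod_(e in ksets n k) wt (e \in S) (g e).

Definition compat (g : state) (f : colhyp n c) : bool :=
  [forall e, (f e != None) ==> (g e == None) || (g e == Some (f e))].

Definition good1 (g : state) : bool :=
  [forall e, (e \notin ksets n k) ==> (g e == Some None)].

Definition good (g : state) : bool :=
  good1 g && [exists f in CC, compat g f].

Definition M S : R := \sum_(g : state) weight S g * (good g)%:R.

Definition upd (g : state) e0 (x : X) : state :=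
  [ffun e => if e == e0 then x else g e].

Lemma sum_upd e0 (F : state -> R) :
  \sum_g F g = \sum_(g : state | g e0 == Some None) \sum_x F (upd g e0 x).
Proof.
transitivity (\sum_(x : X) \sum_(g : state | g e0 == x) F g).
  by rewrite (partition_big (fun g : state => g e0) predT).
rewrite [RHS]exchange_big /=.
apply: eq_bigr => x _.
rewrite (reindex_onto (fun g => upd g e0 x) (fun g => upd g e0 (Some None))).
  apply: eq_bigl => g; rewrite ffunE !eqxx /=.
  apply/eqP/eqP => [<-|E]; first by rewrite ffunE eqxx.
  by apply/ffunP => e; rewrite !ffunE; case: (e =P e0) => // ->; rewrite E.
move=> g /eqP E; apply/ffunP => e; rewrite !ffunE.
by case: (e =P e0) => // ->; rewrite E.
Qed.


Lemma key_ineq (G : X -> bool) :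
  (forall y, G (Some None) -> G y) ->
  (forall a, G (Some (Some a)) -> G None) ->
  (G None -> ~~ G (Some None) -> (l <= #|[set a | G (Some (Some a))]|)%N) ->
  \sum_x wt false x * (G x)%:R <= \sum_x wt true x * (G x)%:R.
Proof.
move=> m1 m2 ri.
rewrite !sum_option /=.
rewrite big1 ?addr0; last by move=> a _; rewrite mul0r.
rewrite mul0r add0r.
have Hs : \sum_(y : 'I_c) q / c%:R * (G (Some (Some y)))%:R
    = q / c%:R *+ #|[set a | G (Some (Some a))]|.
  rewrite -sumr_const [RHS]big_mkcond /=; apply: eq_bigr => a _.
  by rewrite inE; case: (G _); rewrite ?mulr1 ?mulr0.
rewrite Hs qc.
case: (boolP (G (Some None))) => Gabs.
  have -> : G None by apply: m1.
  have -> : #|[set a | G (Some (Some a))]| = c.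
    have -> : [set a | G (Some (Some a))] = setT by apply/setP => a; rewrite !inE m1.
    by rewrite cardsT card_ord.
  rewrite -qc.
  have cn : c%:R != 0 :> R by rewrite pnatr_eq0 -lt0n.
  rewrite /= !mulr1n !mulr1 -mulr_natr divfK //; lra.
rewrite /= ?mulr0n ?mulr0 ?add0r ?addr0.
case: (boolP (G None)) => GN; last first.
  by rewrite mulr0 mulrn_wge0 // divr_ge0.
have := ri GN Gabs.
set m := #|_|; move=> lm.
rewrite mulr1.
have ln : l%:R != 0 :> R by rewrite pnatr_eq0 -lt0n.
rewrite -mulr_natr -mulrA ler_peMr //.
rewrite ler_pdivlMl ?mulr1 ?ler_nat //.
by rewrite ltr0n.
Qed.



Lemma weight_upd S e0 g x : e0 \in ksets n k ->
  weight S (upd g e0 x) =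
  wt (e0 \in S) x * \prod_(e in ksets n k | e != e0) wt (e \in S) (g e).
Proof.
move=> he0; rewrite /weight (bigD1 e0) //= ffunE eqxx; congr (_ * _).
by apply: eq_bigr => e /andP [_ ne]; rewrite ffunE (negbTE ne).
Qed.

Lemma good1_upd g e0 x y : e0 \in ksets n k ->
  good1 (upd g e0 x) = good1 (upd g e0 y).
Proof.
move=> he0; apply: eq_forallb => e; rewrite !ffunE.
by case: (e =P e0) => // ->; rewrite he0.
Qed.

Lemma compat_abs g e0 f y :
  compat (upd g e0 (Some None)) f -> compat (upd g e0 y) f.
Proof.
move=> /forallP H; apply/forallP => e; move: (H e); rewrite !ffunE.
by case: (e =P e0) => // ->; case: (f e0).
Qed.

Lemma compat_col g e0 f a :
  compat (upd g e0 (Some (Some a))) f -> compat (upd g e0 None) f.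
Proof.
move=> /forallP H; apply/forallP => e; move: (H e); rewrite !ffunE.
by case: (e =P e0) => // _ _; rewrite eqxx implybT.
Qed.

Lemma rich_upd g e0 : e0 \in ksets n k -> good (upd g e0 None) ->
  ~~ good (upd g e0 (Some None)) ->
  (l <= #|[set a | good (upd g e0 (Some (Some a)))]|)%N.
Proof.
move=> he0 /andP [g1 /existsP [f /andP [fC cf]]] ng.
have fe0 : f e0 != None.
  apply/negP => /eqP fe; apply: (negP ng).
  rewrite /good (good1_upd _ _ _ None) // g1 /=.
  apply/existsP; exists f; rewrite fC /=.
  apply/forallP => e; move/forallP: cf => /(_ e); rewrite !ffunE.
  by case: (e =P e0) => // ->; rewrite fe.
apply: leq_trans (rCC _ fC _ fe0) _.
apply: subset_leq_card; apply/subsetP => a; rewrite !inE => ra.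
rewrite /good (good1_upd _ _ _ None) // g1 /=.
apply/existsP; exists (recolor f e0 a); rewrite ra /=.
apply/forallP => e; move/forallP: cf => /(_ e); rewrite !ffunE.
by case: (e =P e0) => [->|ne] //= _; rewrite eqxx orbT.
Qed.

Lemma step (S : {set {set 'I_n}}) e0 : e0 \in ksets n k -> e0 \notin S -> M S <= M (e0 |: S).
Proof.
move=> he0 nS; rewrite /M (sum_upd e0) [X in _ <= X](sum_upd e0).
apply: ler_sum => g _.
set r := \prod_(e in ksets n k | e != e0) wt (e \in S) (g e).
have -> : \sum_x weight S (upd g e0 x) * (good (upd g e0 x))%:R
    = r * \sum_x wt false x * (good (upd g e0 x))%:R.
  rewrite mulr_sumr; apply: eq_bigr => x _.
  rewrite weight_upd // (negbTE nS) -/r; ring.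
have -> : \sum_x weight (e0 |: S) (upd g e0 x) * (good (upd g e0 x))%:R
    = r * \sum_x wt true x * (good (upd g e0 x))%:R.
  rewrite mulr_sumr; apply: eq_bigr => x _.
  rewrite weight_upd // setU11.
  have -> : \prod_(e in ksets n k | e != e0) wt (e \in e0 |: S) (g e) = r.
    by apply: eq_bigr => e /andP [_ ne]; rewrite in_setU1 (negbTE ne).
  ring.
apply: ler_wpM2l; first by apply: prodr_ge0 => e _; apply: wt_ge0.
apply: key_ineq.
- move=> y /andP [g1 /existsP [f /andP [fC cf]]]; apply/andP; split.
    by rewrite (good1_upd _ _ _ (Some None)).
  by apply/existsP; exists f; rewrite fC; apply: compat_abs.
- move=> a /andP [g1 /existsP [f /andP [fC cf]]]; apply/andP; split.
    by rewrite (good1_upd _ _ _ (Some (Some a))).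
  by apply/existsP; exists f; rewrite fC; apply: compat_col cf.
- exact: rich_upd.
Qed.


Lemma M_mono m : forall S : {set {set 'I_n}}, #|S| = m -> S \subset ksets n k -> M set0 <= M S.
Proof.
elim: m => [|m IH] S cS sS.
  by move/eqP: cS; rewrite cards_eq0 => /eqP ->.
have : (0 < #|S|)%N by rewrite cS.
rewrite card_gt0 => /set0Pn [x xS].
rewrite -(setD1K xS).
apply: (le_trans (IH (S :\ x) _ _)).
- by move: cS; rewrite (cardsD1 x S) xS => -[].
- exact: subset_trans (subsetDl _ _) sS.
apply: step; first exact: (subsetP sS x xS).
by rewrite setD11.
Qed.

Definition isU (g : state) := [forall e, (g e == None) || (g e == Some None)].
Definition embU (E : {set {set 'I_n}}) : state :=
  [ffun e => if e \in E then None else Some None].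
Definition hU (g : state) : {set {set 'I_n}} := [set e | g e == None].

Lemma compat_embU E f : compat (embU E) f = (forget f \subset E).
Proof.
apply/forallP/subsetP => H e.
  rewrite inE => fe; move: (H e); rewrite fe ffunE /=.
  by case: (e \in E) => //=; case: (f e) fe.
apply/implyP => fe; have := H e; rewrite inE fe => /(_ isT) eE.
by rewrite ffunE eE.
Qed.

Lemma good1_embU E : good1 (embU E) = is_khyper k E.
Proof.
apply/forallP/subsetP => H e.
  move=> eE; apply/negPn/negP => ne; move: (H e); by rewrite ne ffunE eE.
rewrite ffunE; case: (boolP (e \in E)) => eE; first by rewrite (H _ eE).
by rewrite eqxx implybT.
Qed.

Lemma M0 : M set0 = prob_unc k p (fun H => [exists E in uncolored CC, E \subset H]).
Proof.
rewrite /M /prob_unc.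
transitivity (\sum_(g : state | good g) weight set0 g).
  by rewrite [RHS]big_mkcond; apply: eq_bigr => g _; case: (good g); rewrite ?mulr1 ?mulr0.
rewrite (bigID isU) /= [X in _ + X]big1 ?addr0; last first.
  move=> g /andP [/andP [g1 _] /forallPn [e]]; rewrite negb_or => /andP [ne1 ne2].
  have he : e \in ksets n k.
    by apply/negPn/negP => he; move/forallP: g1 => /(_ e); rewrite he /= (negbTE ne2).
  rewrite /weight (bigD1 e) //= in_set0; move: ne1 ne2.
  by case: (g e) => [[a|]|] //= _ _; rewrite mul0r.
rewrite (reindex_onto embU hU) /=; last first.
  move=> g /andP [_ u]; apply/ffunP => e; rewrite !ffunE inE.
  by move/forallP: u => /(_ e); case: (g e) => [[a|]|].
apply: eq_big => [E|E].
  have -> : isU (embU E) by apply/forallP => e; rewrite ffunE; case: (e \in E).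
  have -> : hU (embU E) == E.
    by apply/eqP/setP => e; rewrite inE ffunE; case: (e \in E).
  rewrite !andbT /good good1_embU; congr (_ && _).
  apply/existsP/existsP => [[f /andP [fC cf]]|[E0 /andP [/imsetP [f fC ->] sE]]].
    exists (forget f); rewrite /uncolored (imset_f _ fC) /=.
    by rewrite -compat_embU.
  by exists f; rewrite fC compat_embU.
move=> /andP [/andP [/andP [g1 _] _] _].
have sE : E \subset ksets n k by rewrite -/(is_khyper k E) -good1_embU.
rewrite /weight.
rewrite (eq_bigr (fun e => if e \in E then p else 1 - p)); last first.
  by move=> e _; rewrite in_set0 ffunE; case: (e \in E).
rewrite (bigID (mem E)) /=.
rewrite (eq_bigr (fun _ => p)); last by move=> e /andP [_ ->].
rewrite [X in _ * X](eq_bigr (fun _ => 1 - p)); last by move=> e /andP [_ /negbTE ->].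
rewrite (eq_bigl (fun e => e \in E)); last first.
  by move=> e; apply/andP/idP => [[]//|eE]; split => //; exact: (subsetP sE).
rewrite [X in _ * X](eq_bigl (fun e => e \in ksets n k :\: E)); last first.
  by move=> e; rewrite !inE andbC.
by rewrite !prodr_const cardsD (setIidPr sE).
Qed.


Definition isC (g : state) := [forall e, g e != None].
Definition embC (F : colhyp n c) : state := [ffun e => Some (F e)].
Definition hC (g : state) : colhyp n c := [ffun e => odflt None (g e)].

Lemma M1 : M (ksets n k) = prob_col k q (fun F => [exists f in CC, contains_col F f]).
Proof.
rewrite /M /prob_col.
transitivity (\sum_(g : state | good g) weight (ksets n k) g).
  by rewrite [RHS]big_mkcond; apply: eq_bigr => g _; case: (good g); rewrite ?mulr1 ?mulr0.
rewrite (bigID isC) /= [X in _ + X]big1 ?addr0; last first.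
  move=> g /andP [/andP [g1 _] /forallPn [e]]; rewrite negbK => /eqP ne.
  have he : e \in ksets n k.
    by apply/negPn/negP => he; move/forallP: g1 => /(_ e); rewrite he /= ne.
  by rewrite /weight (bigD1 e) //= he ne mul0r.
rewrite (reindex_onto embC hC) /=; last first.
  move=> g /andP [_ u]; apply/ffunP => e; rewrite !ffunE.
  by move/forallP: u => /(_ e); case: (g e).
apply: eq_big => [F|F].
  have -> : isC (embC F) by apply/forallP => e; rewrite ffunE.
  have -> : hC (embC F) == F by apply/eqP/ffunP => e; rewrite !ffunE.
  rewrite !andbT /good; congr (_ && _).
    apply: eq_forallb => e; rewrite ffunE.
    by case: (e \in ksets n k); case: (F e) => //=; rewrite ?implybT.
  apply: eq_existsb => f; congr (_ && _).
  by apply: eq_forallb => e; rewrite ffunE.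
move=> _; rewrite /weight; apply: eq_bigr => e he.
by rewrite he ffunE; case: (F e).
Qed.

Lemma main : prob_unc k p (fun H => [exists E in uncolored CC, E \subset H])
  <= prob_col k q (fun F => [exists f in CC, contains_col F f]).
Proof. by rewrite -M0 -M1; exact: (M_mono _ (ksets n k) (erefl _) (subxx _)). Qed.

End Proof.

Theorem theorem2 (R : realFieldType) (n : nat) (p : R) (l c k : nat)
  (CC : {set colhyp n c}) :
  0 <= p -> p <= 1 ->
  (0 < l)%N -> (0 < c)%N ->
  c%:R * p / l%:R <= 1 ->
  (0 < k)%N ->
  (forall f, f \in CC -> is_kcol k f) ->
  rich l CC ->
  prob_unc k p (fun H => [exists E in uncolored CC, E \subset H])
  <= prob_col k (c%:R * p / l%:R)
       (fun F => [exists f in CC, contains_col F f]).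
Proof.
move=> p0 p1 l0 c0 q1 _ _ rCC.
exact: main.
Qed.
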